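(* Fix $p$ and $q$, and let $\widetilde{\mathrm{gr}}$ refer to the absolute $\mathbb{Q}$-grading on $\widehat{HF}(-L(p,q))$. For $0\leq i<p$, $$\widetilde{\mathrm{gr}}(x_{i+q\!\!\mod {p}}) - \widetilde{\mathrm{gr}}(x_i)={1\over p}(p-1-2i).$$
   Context: $p>q$ are relatively prime positive integers. $-L(p,q)$ has the pointed Heegaard diagram with $\Sigma$ the torus $[0,1]\times[0,1]$ with edges identified, $\alpha$ the horizontal circle $y=1/2$, $\beta$ a circle of slope $-p/q$, and $z$ a point below $y=1/2$. The $p$ points of $\alpha\cap\beta$ are labeled $x_0,\ldots,x_{p-1}$ from left to right along $\alpha$, where $x_0$ is the upper right vertex of the region containing $z$ (regions $D_0,\dots,D_{p-1}$ labeled left to right with $z\in D_0$). Each $x_i$ is in a distinct $\mathrm{Spin}^c$ structure and $\widehat{CF}=\widehat{HF}(-L(p,q))$. $\widetilde{\mathrm{gr}}$ is Ozsváth–Szabó's absolute $\mathbb{Q}$-grading, which satisfies, for $0\le i<p+q$, $\widetilde{\mathrm{gr}}_{p,q}(x_{i \bmod p})=\frac{pq-(2i+1-p-q)^2}{4pq}-\widetilde{\mathrm{gr}}_{q,p\bmod q}(x_{i\bmod q})$. *)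

(* Defs.v *)
From mathcomp Require Import all_boot all_order all_algebra.
Set Implicit Arguments. Unset Strict Implicit. Unset Printing Implicit Defensive.
Import Order.TTheory GRing.Theory Num.Theory.
Local Open Scope ring_scope.

(* Ozsvath-Szabo absolute Q-grading of the generator x_i of HF^(-L(p,q)),
   defined by the Ozsvath-Szabo recursion
     gr_{p,q}(x_i) = (pq - (2i+1-p-q)^2)/(4pq) - gr_{q, p mod q}(x_{i mod q})
   (used here for 0 <= i < p), with base case gr_{1,0}(x_0) = 0 (S^3).
   [fuel] is a recursion bound; q strictly decreases along the recursion. *)
Fixpoint gr_aux (fuel p q i : nat) : rat :=
  match fuel with
  | 0%N => 0
  | f.+1 =>
    if q == 0%N then 0
    else ((p * q)%:R - (((2 * i + 1)%:Z - p%:Z - q%:Z) ^+ 2)%:~R) / (4 * p * q)%:R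
         - gr_aux f q (p %% q) (i %% q)
  end.

Definition grt (p q i : nat) : rat := gr_aux q.+1 p q i.

(* Main.v *)
Require Import Defs.
From mathcomp Require Import all_boot all_order all_algebra.
From mathcomp Require Import ring lra zify.
Import Order.TTheory GRing.Theory Num.Theory.
Local Open Scope ring_scope.

Lemma fuelP f1 f2 p q i : (q < f1)%N -> (q < f2)%N -> gr_aux f1 p q i = gr_aux f2 p q i.
Proof.
elim: f1 f2 p q i => [|f1 IH] [|f2] p q i //= h1 h2.
case: eqP => // /eqP q0; congr (_ - _); apply: IH.
  by apply: leq_trans (ltn_pmod _ _) _; rewrite ?lt0n.
by apply: leq_trans (ltn_pmod _ _) _; rewrite ?lt0n.
Qed.

Definition F (p q i : nat) : rat :=
  (p%:R * q%:R - (2 * i%:R + 1 - p%:R - q%:R) ^+ 2) / (4 * p%:R * q%:R).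

Lemma grtE p q i : (0 < q)%N -> grt p q i = F p q i - grt q (p %% q) (i %% q).
Proof.
move=> q0; rewrite /grt /=; have -> : (q == 0%N) = false by case: q q0.
rewrite (@fuelP q (p %% q).+1) ?ltn_pmod //; congr (_ - _).
rewrite /F natrM !natrM; congr (_ / _); congr (_ - _).
rewrite rmorphXn /= !rmorphB /= rmorphD /=.
by rewrite !pmulrn PoszM intrD intrM.
Qed.

Lemma grt0 q x : grt q 0 x = 0.
Proof. by []. Qed.

Lemma main p : forall q i, (0 < q)%N -> (q < p)%N -> coprime p q -> (i < p)%N ->
  grt p q ((i + q) %% p) - grt p q i = (p%:R - 1 - 2 * i%:R) / p%:R.
Proof.
elim: p {-2}p (leqnn p) => [|n IH] p hp q i q0 qp cop ip.
  by move: qp; rewrite leqn0 in hp; rewrite (eqP hp).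
have p0 : p != 0%N by case: p qp {hp cop ip}.
have pR : (p%:R : rat) != 0 by rewrite pnatr_eq0.
have qR : (q%:R : rat) != 0 by rewrite pnatr_eq0 -lt0n.
rewrite (@grtE p q _ q0) (@grtE p q i q0).
case: (ltnP (i + q) p) => h.
  rewrite (modn_small h) modnDr /F natrD; field; by rewrite pR qR.
have [j ej jq] : exists2 j, (i + q = j + p)%N & (j < q)%N.
  exists (i + q - p)%N; first by rewrite subnK.
  by rewrite ltn_subLR // ltn_add2r.
have jp : (j < p)%N by apply: ltn_trans qp.
have iR : (i%:R : rat) = j%:R + p%:R - q%:R.
  by apply/eqP; rewrite -subr_eq opprK -!natrD ej.
rewrite ej modnDr (modn_small jp) (modn_small jq).
have -> : (i %% q = (j + p %% q) %% q)%N by rewrite modnDmr -ej modnDr.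
have [r0|rpos] := posnP (p %% q).
  have q1 : q = 1%N.
    apply/eqP; move: cop; rewrite /coprime.
    by have /gcdn_idPr -> : (q %| p)%N by rewrite /dvdn r0.
  subst q; have j0 : j = 0%N by move: jq; rewrite ltnS leqn0 => /eqP.
  subst j; rewrite r0 !grt0 /F iR; field; by rewrite pR.
have := IH q _ (p %% q)%N j rpos (ltn_pmod _ q0) _ jq.
rewrite coprime_modr coprime_sym => /(_ (leq_trans qp hp) cop) H.
have -> : grt q (p %% q)%N ((j + p %% q) %% q)%N = grt q (p %% q)%N j + (q%:R - 1 - 2 * j%:R) / q%:R.
  by rewrite -H; ring.
rewrite /F iR; field; by rewrite pR qR.
Qed.

Theorem corollary5p2 (p q : nat) (hq : (0 < q)%N) (hpq : (q < p)%N)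
  (hcop : coprime p q) (i : nat) (hi : (i < p)%N) :
  grt p q ((i + q) %% p) - grt p q i = (p%:R - 1 - 2 * i%:R) / p%:R.
Proof. exact: main. Qed.
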